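(* Let $\mathcal{S}$ be an instance space, $\mathcal{W}$ a hypothesis space, and $\ell:\mathcal{S}\times\mathcal{W}\to\mathbb{R}^+$ a nonnegative loss function. Let $\mathbf{S}=(S_1,\ldots,S_n)$ have law $\pi^{\otimes n}$ for an (unknown) distribution $\pi$ on $\mathcal{S}$, and let $W\in\mathcal{W}$ be produced by a learning algorithm $\mathcal{A}$ given by a conditional distribution $P_{W|\mathbf{S}}$; let $P_W$ denote the marginal law of $W$. Let $(\bar S,\bar W)\sim \pi\otimes P_W$ (independent) and let $\Lambda(\lambda)=\log\mathbb{E}\big[e^{\lambda(\ell(\bar S,\bar W)-\mathbb{E}[\ell(\bar S,\bar W)])}\big]$ be the cumulant generating function of $\ell(\bar S,\bar W)$. Suppose that for some $b_+\in(0,\infty]$ there is a convex $\psi_+:[0,b_+)\to\mathbb{R}$ with $\psi_+(0)=\psi_+'(0)=0$ and $\Lambda(\lambda)\le\psi_+(\lambda)$ for all $\lambda\in[0,b_+)$, and that for some $b_-\in(0,\infty]$ there is a convex $\psi_-:[0,b_-)\to\mathbb{R}$ with $\psi_-(0)=\psi_-'(0)=0$ and $\Lambda(\lambda)\le\psi_-(-\lambda)$ for all $\lambda\in(-b_-,0]$. Then \[ -\frac{1}{n}\sum_{i=1}^n \psi_+^{\ast-1}\big(I(S_i;W)\big)\;\le\;{\rm gen}(\pi,\mathcal{A})\;\le\;\frac{1}{n}\sum_{i=1}^n \psi_-^{\ast-1}\big(I(S_i;W)\big). \]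
   Context: For a hypothesis $w$, the true risk is $L_\pi(w)=\mathbb{E}_{S\sim\pi}[\ell(S,w)]$ and the empirical risk is $L_{\mathbf{S}}(w)=\frac1n\sum_{i=1}^n\ell(S_i,w)$. The expected generalization error is ${\rm gen}(\pi,\mathcal{A})=\mathbb{E}[L_\pi(W)-L_{\mathbf{S}}(W)]$, with the expectation over $(\mathbf{S},W)\sim\pi^{\otimes n}P_{W|\mathbf{S}}$. $I(\cdot;\cdot)$ denotes mutual information. For a convex $\psi:[0,b)\to\mathbb{R}$, $\psi^\ast(x)=\sup_{\lambda\in[0,b)}(\lambda x-\psi(\lambda))$ is its Legendre dual and $\psi^{\ast-1}$ denotes the inverse of $\psi^\ast$ (on $[0,\infty)$). *)

(* Defs.v *)
From HB Require Import structures.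
From mathcomp Require Import all_boot all_order all_algebra.
From mathcomp Require Import all_classical all_reals all_analysis.

Set Implicit Arguments.
Unset Strict Implicit.
Unset Printing Implicit Defensive.

Import Order.TTheory GRing.Theory Num.Theory.
Import numFieldNormedType.Exports.

Local Open Scope classical_set_scope.
Local Open Scope ring_scope.

Section pairRV.
Context d dS dW (Omega : measurableType d) (S : measurableType dS)
  (W : measurableType dW).
Variables (X : {mfun Omega >-> S}) (Y : {mfun Omega >-> W}).

Definition pairRV : Omega -> S * W := fun w => (X w, Y w).

Let mpairRV : measurable_fun [set: Omega] pairRV.
Proof. by apply: measurable_fun_pair. Qed.

HB.instance Definition _ := isMeasurableFun.Build _ _ _ _ pairRV mpairRV.
End pairRV.

Section defs.
Local Open Scope ereal_scope.
Context (R : realType).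

Definition KL d (T : measurableType d) (p q : probability T R) : \bar R :=
  if pselect (p `<< q) then
    \int[p]_x (ln (fine (Radon_Nikodym (charge_of_finite_measure p) q x)))%:E
  else +oo.

Definition mutual_info d dS dW (Omega : measurableType d)
  (S : measurableType dS) (W : measurableType dW) (P : probability Omega R)
  (X : {mfun Omega >-> S}) (Y : {mfun Omega >-> W}) : \bar R :=
  KL (distribution P (pairRV X Y)) (distribution P X \x distribution P Y).

Definition iid_law d dS (Omega : measurableType d) (S : measurableType dS)
  (P : probability Omega R) (n : nat) (Ss : 'I_n -> Omega -> S)
  (pi : probability S R) : Prop :=
  forall A : 'I_n -> set S, (forall i, measurable (A i)) ->
    P (\bigcap_(i in [set: 'I_n]) (Ss i @^-1` A i)) = \prod_(i < n) pi (A i).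

Definition dom0b (b : \bar R) : set R := [set x | (0 <= x)%R /\ x%:E < b].

Definition legendre_dual (b : \bar R) (psi : R -> R) (x : R) : \bar R :=
  ereal_sup [set ((l * x - psi l)%R)%:E | l in dom0b b].

(* (Generalized) inverse of psi^* on [0, +oo):
   psi^{*-1}(y) = inf { x >= 0 | psi^*(x) > y }  (= +oo when y = +oo). *)
Definition legendre_dual_inv (b : \bar R) (psi : R -> R) (y : \bar R) : \bar R :=
  ereal_inf [set x%:E | x in [set x : R | (0 <= x)%R /\ y < legendre_dual b psi x]].

Definition cgf d (T : measurableType d) (mu : probability T R) (f : T -> R)
  (l : R) : \bar R :=
  let m := fine (\int[mu]_x (f x)%:E) in
  match \int[mu]_x (expR (l * (f x - m)))%:E with
  | r%:E => (ln r)%:E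
  | _ => +oo
  end.

Definition pop_risk dS (S : measurableType dS) (W : Type)
  (pi : probability S R) (loss : S -> W -> R) (w : W) : \bar R :=
  \int[pi]_s (loss s w)%:E.

Definition emp_risk (S : Type) (W : Type) (n : nat) (s : 'I_n -> S)
  (loss : S -> W -> R) (w : W) : \bar R :=
  (n%:R^-1)%:E * \sum_(i < n) (loss (s i) w)%:E.

Definition gen_error d dS dW (Omega : measurableType d) (S : measurableType dS)
  (W : measurableType dW) (P : probability Omega R) (pi : probability S R)
  (loss : S -> W -> R) (n : nat) (Ss : 'I_n -> Omega -> S) (Wr : Omega -> W)
  : \bar R :=
  \int[P]_o (pop_risk pi loss (Wr o) - emp_risk (fun i => Ss i o) loss (Wr o)).

End defs.

(* Main.v *)
Require Import Defs.
From HB Require Import structures.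
From mathcomp Require Import all_boot all_order all_algebra.
From mathcomp Require Import all_classical all_reals all_analysis.
From mathcomp Require Import measurable_realfun lra.
Import Order.TTheory GRing.Theory Num.Theory.
Import numFieldNormedType.Exports.
Local Open Scope classical_set_scope.
Local Open Scope ring_scope.

Lemma gle (R : realType) d (T : measurableType d) (mu : {measure set T -> \bar R})
  (f1 f2 : T -> R) : (forall x, 0 <= f1 x) -> measurable_fun setT f1 ->
  measurable_fun setT f2 -> (forall x, f1 x <= f2 x) ->
  (\int[mu]_x (f1 x)%:E <= \int[mu]_x (f2 x)%:E)%E.
Proof.
move=> f10 mf1 mf2 le12; apply: ge0_le_integral => //.
- by move=> x _; rewrite lee_fin.
- exact/measurable_EFinP.
- exact/measurable_EFinP.
- by move=> x _; rewrite lee_fin.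
Qed.

Lemma aegle (R : realType) d (T : measurableType d) (mu : {measure set T -> \bar R})
  (f1 f2 : T -> R) : (forall x, 0 <= f1 x) -> measurable_fun setT f1 ->
  (forall x, 0 <= f2 x) ->
  measurable_fun setT f2 -> {ae mu, forall x, f1 x <= f2 x} ->
  (\int[mu]_x (f1 x)%:E <= \int[mu]_x (f2 x)%:E)%E.
Proof.
move=> f10 mf1 f20 mf2 le12; apply: ae_ge0_le_integral => //.
- by move=> x _; rewrite lee_fin.
- exact/measurable_EFinP.
- by move=> x _; rewrite lee_fin.
- exact/measurable_EFinP.
- by apply: filterS le12 => x h _; rewrite lee_fin.
Qed.

Lemma maxid {R : realType} (u : R) : Num.max u 0 - Num.max (- u) 0 = u.
Proof. rewrite /Num.max; case: ifPn => h1; case: ifPn => h2; lra. Qed.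

Lemma max0ge (R : realType) (u : R) : 0 <= Num.max u 0.
Proof. by rewrite le_max lexx orbT. Qed.

Lemma intD (R : realType) d (T : measurableType d) (mu : {measure set T -> \bar R})
  (u v : T -> R) : (forall x, 0 <= u x) -> measurable_fun setT u ->
  (forall x, 0 <= v x) -> measurable_fun setT v ->
  (\int[mu]_x (u x + v x)%:E = \int[mu]_x (u x)%:E + \int[mu]_x (v x)%:E)%E.
Proof.
move=> u0 mu_ v0 mv.
under eq_integral do rewrite EFinD.
apply: ge0_integralD => //.
- by move=> x _; rewrite lee_fin.
- exact/measurable_EFinP.
- by move=> x _; rewrite lee_fin.
- exact/measurable_EFinP.
Qed.

Lemma intZ (R : realType) d (T : measurableType d) (mu : {measure set T -> \bar R})
  (k : R) (u : T -> R) : 0 <= k -> (forall x, 0 <= u x) -> measurable_fun setT u ->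
  (\int[mu]_x (k * u x)%:E = k%:E * \int[mu]_x (u x)%:E)%E.
Proof.
move=> k0 u0 mu_.
under eq_integral do rewrite EFinM.
apply: ge0_integralZl_EFin => //.
- by move=> x _; rewrite lee_fin.
- exact/measurable_EFinP.
Qed.

Lemma intC (R : realType) d (T : measurableType d) (mu : probability T R)
  (k : R) : (\int[mu]_x (k%:E) = k%:E)%E.
Proof.
rewrite (_ : \int[mu]_x k%:E = \int[mu]_x (cst k%:E) x)%E //.
rewrite integral_cst// -[RHS]mule1; congr (_ * _)%E; exact: probability_setT.
Qed.

Section DV.
Local Open Scope ereal_scope.
Context (R : realType) d (T : measurableType d) (p q : probability T R).
Hypothesis pq : p `<< q.

Local Notation fSF := (Radon_Nikodym_SigmaFinite.f p q).
Let fSF_ge0 x : 0 <= fSF x := Radon_Nikodym_SigmaFinite.f_ge0 pq x.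
Let fSF_fin x : fSF x \is a fin_num := Radon_Nikodym_SigmaFinite.f_fin_num pq x.
Let mfSF : measurable_fun setT fSF.
Proof. exact: (measurable_int q (Radon_Nikodym_SigmaFinite.f_integrable pq)). Qed.
Let phi x := fine (fSF x).
Let phiE x : fSF x = (phi x)%:E.
Proof. by rewrite /phi fineK. Qed.
Let phi_ge0 x : (0 <= phi x)%R.
Proof. by rewrite -lee_fin -phiE. Qed.
Let mphi : measurable_fun setT phi.
Proof.
apply/(measurable_EFinP setT phi).
by rewrite (_ : EFin \o phi = fSF)//; apply/funext => x /=; rewrite -phiE.
Qed.

Let KLE : KL p q = \int[p]_x (ln (phi x))%:E.
Proof.
rewrite /KL; case: pselect => // pq'.
apply: ae_eq_integral => //.
- apply/measurable_EFinP; apply: measurableT_comp; first exact: measurable_ln.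
  apply: (measurableT_comp (f := fine)) => //.
- apply/measurable_EFinP; apply: measurableT_comp; first exact: measurable_ln.
  exact: mphi.
apply: (null_dominates_ae_eq measurableT pq).
have := ae_eq_Radon_Nikodym_SigmaFinite pq measurableT.
apply: filterS => x h Tx; rewrite /phi (h Tx).
by [].
Qed.


Lemma lnle (y : R) : (0 < y)%R -> (ln y <= y - 1)%R.
Proof.
move=> y0; have := @le_ln1Dx R (y - 1).
rewrite (addrC 1%R) subrK; apply; lra.
Qed.

Variables (f : T -> R) (c m z : R).
Hypotheses (f0 : forall x, (0 <= f x)%R) (mf : measurable_fun setT f).
Hypothesis Zq : \int[q]_x (expR (c * (f x - m)))%:E = z%:E.
Let g x := (c * (f x - m))%R.
Let mg : measurable_fun setT g.
Proof. by apply: measurable_funM => //; apply: measurable_funB. Qed.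
Let mexpg : measurable_fun setT (fun x => expR (g x)).
Proof. by apply: measurableT_comp => //; exact: measurable_expR. Qed.

Let z0 : (0 < z)%R.
Proof.
have zge : 0 <= z%:E.
  by rewrite -Zq; apply: integral_ge0 => x _; rewrite lee_fin expR_ge0.
rewrite lt_neqAle -lee_fin zge andbT; apply/negP => /eqP z0.
have mge : measurable_fun setT (fun x => (expR (g x))%:E).
  by apply/measurable_EFinP.
have := (ae_eq_integral_abs q measurableT mge).1.
case.
  under eq_integral do rewrite gee0_abs ?lee_fin ?expR_ge0//.
  by rewrite Zq -z0.
move=> N [mN qN0 sub].
have : q setT <= q N.
  apply: le_measure; rewrite ?inE//.
  by move=> x _; apply: sub => /= /(_ I) /eqP; rewrite eqe gt_eqF// expR_gt0.
by rewrite qN0 probability_setT lee_fin ler10.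
Qed.


Let phi_pos_ae : {ae p, forall x, (0 < phi x)%R}.
Proof.
pose A := phi @^-1` [set 0%R].
have mA : measurable A by rewrite -[A]setTI; exact: mphi.
exists A; split => //.
  rewrite (Radon_Nikodym_SigmaFinite.f_integral pq mA).
  apply: integral0_eq => x; rewrite /A /= phiE => ->; done.
move=> x /= h; rewrite /A /=; apply/eqP; rewrite eq_le phi_ge0 andbT.
by rewrite leNgt; apply/negP.
Qed.

Let cov (h : T -> R) : (forall x, 0 <= h x)%R -> measurable_fun setT h ->
  \int[p]_x (h x)%:E = \int[q]_x (h x * phi x)%:E.
Proof.
move=> h0 mh.
rewrite -(Radon_Nikodym_SigmaFinite.change_of_variables pq).
- by apply: eq_integral => x _; rewrite phiE.
all: try (by move=> x; rewrite lee_fin).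
all: try exact: measurableT.
exact/measurable_EFinP.
Qed.


Let lnp x := (Num.max (ln (phi x)) 0)%R.
Let lnn x := (Num.max (- ln (phi x)) 0)%R.
Let mln : measurable_fun setT (fun x => ln (phi x)).
Proof. by apply: measurableT_comp => //; exact: measurable_ln. Qed.
Let mlnp : measurable_fun setT lnp.
Proof. by apply: measurable_maxr. Qed.
Let mlnn : measurable_fun setT lnn.
Proof. by apply: measurable_maxr => //; exact: measurable_funN. Qed.
Let lnp_ge0 x : (0 <= lnp x)%R. Proof. by rewrite /lnp le_max lexx orbT. Qed.
Let lnn_ge0 x : (0 <= lnn x)%R. Proof. by rewrite /lnn le_max lexx orbT. Qed.

Let KL_split : KL p q = \int[p]_x (lnp x)%:E - \int[p]_x (lnn x)%:E.
Proof.
rewrite KLE integralE; congr (_ - _); apply: eq_integral => x _.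
  by rewrite funeposE /lnp EFin_max.
by rewrite funenegE /lnn EFin_max.
Qed.

Let N_le1 : \int[p]_x (lnn x)%:E <= 1.
Proof.
rewrite cov//; apply: (@le_trans _ _ (\int[q]_x (cst 1%R x)%:E)).
  apply: gle => //.
  - by move=> x; rewrite mulr_ge0.
  - by apply: measurable_funM.
  move=> x; rewrite /lnn /=.
  have [->|phx] := eqVneq (phi x) 0%R; first by rewrite mulr0.
  have ph0 : (0 < phi x)%R by rewrite lt_neqAle eq_sym phx phi_ge0.
  have [ph1|ph1] := leP 1%R (phi x).
    have := ln_ge0 ph1; have := phi_ge0 x.
    rewrite /Num.max; case: ifPn => _ ? ?; nra.
  have := @lnle ((phi x)^-1)%R ltac:(by rewrite invr_gt0).
  rewrite lnV ?posrE// => h.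
  have h2 : (- ln (phi x) * phi x <= 1 - phi x)%R.
    have := ler_wpM2r (phi_ge0 x) h.
    by rewrite mulrBl mulVf ?mul1r.
  rewrite /Num.max; case: ifPn => _; [nra|nra].
rewrite [leLHS](_ : _ = \int[q]_x (cst 1) x); last by apply: eq_integral.
by rewrite integral_cst// mul1e probability_le1.
Qed.


Lemma KL_gtNy : -oo < KL p q.
Proof.
rewrite KL_split.
have := N_le1; have : 0 <= \int[p]_x (lnn x)%:E.
  by apply: integral_ge0 => x _; rewrite lee_fin.
have : 0 <= \int[p]_x (lnp x)%:E.
  by apply: integral_ge0 => x _; rewrite lee_fin.
case: (\int[p]_x (lnp x)%:E) => [a||//]; case: (\int[p]_x (lnn x)%:E) => [b||//] //=.
by rewrite ltNye.
Qed.

Let y x := expR (g x - ln z - ln (phi x)).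
Let my : measurable_fun setT y.
Proof.
apply: measurableT_comp; first exact: measurable_expR.
apply: measurable_funB => //; apply: measurable_funB => //.
Qed.
Let y_ge0 x : (0 <= y x)%R. Proof. exact: expR_ge0. Qed.

Let E_le1 : \int[p]_x (y x)%:E <= 1.
Proof.
rewrite cov//; apply: (@le_trans _ _ (\int[q]_x (z^-1 * expR (g x))%:E)).
  apply: gle => //.
  - by move=> x; rewrite mulr_ge0.
  - by apply: measurable_funM.
  - by apply: measurable_funM.
  move=> x; have [->|phx] := eqVneq (phi x) 0%R.
    by rewrite mulr0 mulr_ge0 ?invr_ge0 ?expR_ge0 ?ltW.
  have ph0 : (0 < phi x)%R by rewrite lt_neqAle eq_sym phx phi_ge0.
  rewrite /y !expRD !expRN !lnK ?posrE// -mulrA mulVf// mulr1 mulrC.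
  by rewrite le_eqVlt eqxx.
rewrite intZ //; first by rewrite Zq -EFinM mulVf ?gt_eqF.
by rewrite invr_ge0 ltW.
Qed.

Variable k : R.
Hypothesis KLk : KL p q = k%:E.

Let ptw x : (0 < phi x)%R -> (c * f x <= (ln z - 1 + c * m) + ln (phi x) + y x)%R.
Proof.
move=> ph0; have := @lnle (expR (g x - ln z - ln (phi x))) (expR_gt0 _).
rewrite expRK /y /g mulrBr; lra.
Qed.

Let cp := (Num.max c 0)%R.
Let cm := (Num.max (- c) 0)%R.
Let K := (ln z - 1 + c * m)%R.
Let Kp := (Num.max K 0)%R.
Let Km := (Num.max (- K) 0)%R.
Let L x := (cp * f x + lnn x + Km)%R.
Let Rr x := (cm * f x + Kp + lnp x + y x)%R.

Let int_ineq : cp%:E * \int[p]_x (f x)%:E + \int[p]_x (lnn x)%:E + Km%:E <=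
  cm%:E * \int[p]_x (f x)%:E + Kp%:E + \int[p]_x (lnp x)%:E + \int[p]_x (y x)%:E.
Proof.
have cp0 : (0 <= cp)%R by exact: max0ge.
have cm0 : (0 <= cm)%R by exact: max0ge.
have Kp0 : (0 <= Kp)%R by exact: max0ge.
have Km0 : (0 <= Km)%R by exact: max0ge.
have h1 : forall x, (0 <= cp * f x)%R by move=> x; rewrite mulr_ge0.
have h2 : forall x, (0 <= cm * f x)%R by move=> x; rewrite mulr_ge0.
have h3 : forall x, (0 <= cp * f x + lnn x)%R by move=> x; rewrite addr_ge0.
have h4 : forall x, (0 <= cm * f x + Kp)%R by move=> x; rewrite addr_ge0.
have h5 : forall x, (0 <= cm * f x + Kp + lnp x)%R by move=> x; rewrite addr_ge0.
have h6 : forall x, (0 <= Km)%R by [].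
have h7 : forall x, (0 <= Kp)%R by [].
have m1 : measurable_fun setT (fun x => cp * f x)%R by apply: measurable_funM.
have m2 : measurable_fun setT (fun x => cm * f x)%R by apply: measurable_funM.
have m3 : measurable_fun setT (fun x => cp * f x + lnn x)%R by apply: measurable_funD.
have m4 : measurable_fun setT (fun x => cm * f x + Kp)%R by apply: measurable_funD.
have m5 : measurable_fun setT (fun x => cm * f x + Kp + lnp x)%R by apply: measurable_funD.
have m6 : measurable_fun setT (fun x : T => Km) by [].
have m7 : measurable_fun setT (fun x : T => Kp) by [].
have hL : \int[p]_x (L x)%:E =
    cp%:E * \int[p]_x (f x)%:E + \int[p]_x (lnn x)%:E + Km%:E.
  by rewrite /L intD// intD// intZ// intC.
have hR : \int[p]_x (Rr x)%:E =
    cm%:E * \int[p]_x (f x)%:E + Kp%:E + \int[p]_x (lnp x)%:E + \int[p]_x (y x)%:E.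
  by rewrite /Rr intD// intD// intD// intZ// intC.
rewrite -hL -hR; apply: aegle.
- by move=> x; rewrite /L !addr_ge0.
- by apply: measurable_funD.
- by move=> x; rewrite /Rr !addr_ge0.
- by apply: measurable_funD.
apply: filterS phi_pos_ae => x /ptw h.
rewrite /L /Rr.
have e1 := maxid (R:=R) c; have e2 := maxid (R:=R) K; have e3 := maxid (R:=R) (ln (phi x)).
have e4 : (cp * f x - cm * f x = c * f x)%R by rewrite -mulrBl maxid.
rewrite /lnp /lnn; rewrite -/cp -/cm -/Kp -/Km -/K in e1 e2 e4 h *.
lra.
Qed.

Let finE (x : \bar R) : 0 <= x -> x <= 1 -> exists x' : R, x = x'%:E /\ (0 <= x' <= 1)%R.
Proof.
move=> x0 x1; exists (fine x); have xf : x \is a fin_num.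
  by rewrite ge0_fin_numE// (le_lt_trans x1)// ltry.
by rewrite fineK//; split => //; rewrite -!lee_fin fineK// x0 x1.
Qed.

Let fin_case (F : R) : \int[p]_x (f x)%:E = F%:E -> (c * F - c * m <= k + ln z)%R.
Proof.
move=> FE.
have [N' [NE N01]] := finE _ (integral_ge0 _ (fun x _ => lnn_ge0 x : 0 <= (lnn x)%:E)) N_le1.
have [E' [EE E01]] := finE _ (integral_ge0 _ (fun x _ => y_ge0 x : 0 <= (y x)%:E)) E_le1.
have PpE : \int[p]_x (lnp x)%:E = (k + N')%:E.
  move: KLk; rewrite KL_split NE.
  case: (\int[p]_x (lnp x)%:E) => [r|//|//].
  by rewrite -EFinB => -[<-]; rewrite subrK.
have := int_ineq; rewrite FE NE EE PpE -!EFinM -!EFinD lee_fin => h.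
have e1 := maxid (R:=R) c; have e2 := maxid (R:=R) K.
have e4 : (cp * F - cm * F = c * F)%R by rewrite -mulrBl maxid.
rewrite -/cp -/cm -/Kp -/Km -/K in e1 e2 e4 h *.
rewrite /K in e2; lra.
Qed.

Lemma DV_pos : (0 < c)%R -> exists F : R, \int[p]_x (f x)%:E = F%:E /\
  (c * F - c * m <= k + ln z)%R.
Proof.
move=> c0.
have [N' [NE N01]] := finE _ (integral_ge0 _ (fun x _ => lnn_ge0 x : 0 <= (lnn x)%:E)) N_le1.
have [E' [EE E01]] := finE _ (integral_ge0 _ (fun x _ => y_ge0 x : 0 <= (y x)%:E)) E_le1.
have PpE : \int[p]_x (lnp x)%:E = (k + N')%:E.
  move: KLk; rewrite KL_split NE.
  case: (\int[p]_x (lnp x)%:E) => [r|//|//].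
  by rewrite -EFinB => -[<-]; rewrite subrK.
have F0 : 0 <= \int[p]_x (f x)%:E by apply: integral_ge0 => x _; rewrite lee_fin.
move: F0; case FE: (\int[p]_x (f x)%:E) => [F| |//] _.
  by exists F; split => //; exact: fin_case.
have := int_ineq; rewrite FE NE EE PpE.
have cp0 : (0 < cp)%R by rewrite /cp lt_max c0.
have cm0 : cm = 0%R by rewrite /cm /Num.max; case: ifPn => //; lra.
by rewrite gt0_muley ?lte_fin// cm0 mul0e add0e !addye.
Qed.

Lemma DV_neg (F : R) : \int[p]_x (f x)%:E = F%:E -> (c * F - c * m <= k + ln z)%R.
Proof. exact: fin_case. Qed.

End DV.

Lemma KL_ge0 (R : realType) d (T : measurableType d) (p q : probability T R)
  (k : R) : p `<< q -> KL p q = k%:E -> 0 <= k.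
Proof.
move=> pq KLk.
have Zq : (\int[q]_x (expR (1 * ((fun _ : T => 0%R) x - 0)))%:E = 1%:E)%E.
  under eq_integral do rewrite subr0 mulr0 expR0.
  exact: intC.
have [F [FE h]] := @DV_pos R d T p q pq (fun _ => 0%R) 1%R 0%R 1%R (fun x => lexx 0) (measurable_cst _) Zq k KLk ltr01.
have : (0 <= F%:E)%E by rewrite -FE; apply: integral_ge0 => x _; rewrite lee_fin.
rewrite lee_fin; move: h; rewrite ln1; lra.
Qed.

Lemma ldi_bound (R : realType) (b : \bar R) (psi : R -> R) (k D : R) :
  0 <= k -> psi 0 = 0 ->
  (forall l, dom0b b l -> 0 < l -> l * D <= k + psi l) ->
  (D%:E <= legendre_dual_inv b psi k%:E)%E.
Proof.
move=> k0 psi0 H; apply: le_ereal_inf_tmp => _ [x [x0 hx] <-].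
have [_ [l dl <-]] := ereal_sup_gt hx.
rewrite lte_fin => hl.
have l0 : 0 < l.
  rewrite lt_neqAle (proj1 dl) andbT; apply/negP => /eqP l0.
  by move: hl; rewrite -l0 psi0 mul0r subr0; lra.
have := H l dl l0 => h.
rewrite lee_fin; rewrite -(ler_pM2l l0); lra.
Qed.


Lemma ldi_ge0 (R : realType) (b : \bar R) (psi : R -> R) y :
  (0 <= legendre_dual_inv b psi y)%E.
Proof. by apply: le_ereal_inf_tmp => _ [x [x0 _] <-]; rewrite lee_fin. Qed.

Lemma ldi_y (R : realType) (b : \bar R) (psi : R -> R) :
  legendre_dual_inv b psi +oo%E = +oo%E.
Proof.
apply/ereal_inf_pinfty => y [x [_ h] <-]; by move: h; rewrite ltNge leey.
Qed.

Section core.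
Context (R : realType) d (T : measurableType d) (p q Q : probability T R).
Variables (f : T -> R) (f0 : forall x, 0 <= f x) (mf : measurable_fun setT f).
Hypothesis hQ : forall A, measurable A -> q A = Q A.
Variables (m' : R) (hm : (\int[Q]_x (f x)%:E = m'%:E)%E).
Variables (bp bm : \bar R) (psip psim : R -> R).
Hypotheses (psip0 : psip 0 = 0) (psim0 : psim 0 = 0) (bp0 : (0 < bp)%E).
Hypothesis hp : forall l, dom0b bp l -> (cgf Q f l <= (psip l)%:E)%E.
Hypothesis hn : forall l, l <= 0 -> (- bm < l%:E)%E -> (cgf Q f l <= (psim (- l))%:E)%E.
Variables (k : R) (KLk : KL p q = k%:E).

Let pq : p `<< q.
Proof. by move: KLk; rewrite /KL; case: pselect. Qed.

Let qQ (h : T -> \bar R) : (\int[q]_x h x = \int[Q]_x h x)%E.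
Proof. by apply: eq_measure_integral => A mA _; exact: hQ. Qed.

Let cgfE l b : (cgf Q f l <= b%:E)%E -> exists r,
  (\int[q]_x (expR (l * (f x - m')))%:E = r%:E)%E /\ ln r <= b.
Proof.
rewrite /cgf hm /= qQ.
case: (\int[Q]_x _)%E => [r|//|//] h; exists r; split => //.
Qed.

Lemma core : exists F, (\int[p]_x (f x)%:E = F%:E)%E /\
  ((m' - F)%:E <= legendre_dual_inv bm psim k%:E)%E /\
  (- legendre_dual_inv bp psip k%:E <= (m' - F)%:E)%E.
Proof.
have k0 := @KL_ge0 _ _ _ p q k pq KLk.
have [l0 [l0pos l0b]] : exists l, 0 < l /\ (l%:E < bp)%E.
  move: bp0; case: bp => [r| _ |//].
    rewrite lte_fin => r0; exists (r / 2); rewrite lte_fin; split; lra.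
  by exists 1; split => //; rewrite ltry.
have [r0 [Zr0 _]] := cgfE _ _ (hp _ (conj (ltW l0pos) l0b)).
have [F [FE _]] := @DV_pos _ _ _ p q pq f _ _ _ f0 mf Zr0 k KLk l0pos.
exists F; split => //; split.
- apply: ldi_bound => // l dl lpos.
  have hl : (- bm < (- l)%:E)%E.
    by rewrite EFinN lteN2; exact: (proj2 dl).
  have nl : - l <= 0 by rewrite oppr_le0 ltW.
  have [r [Zr hr]] := cgfE _ _ (hn _ nl hl).
  have := @DV_neg _ _ _ p q pq f _ _ _ f0 mf Zr k KLk _ FE.
  rewrite opprK in hr; move: hr; rewrite mulrBr; lra.
- rewrite leeNl -EFinN opprB; apply: ldi_bound => // l dl lpos.
  have [r [Zr hr]] := cgfE _ _ (hp _ dl).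
  have [F' [FE' h]] := @DV_pos _ _ _ p q pq f _ _ _ f0 mf Zr k KLk lpos.
  move: FE'; rewrite FE => -[FF]; rewrite -FF in h; move: h hr; rewrite mulrBr; lra.
Qed.

End core.

Lemma ge0_intble (R : realType) d (T : measurableType d)
  (mu : {measure set T -> \bar R}) (h : T -> \bar R) (r : R) :
  (forall x, (0 <= h x)%E) -> measurable_fun setT h ->
  (\int[mu]_x h x = r%:E)%E -> mu.-integrable setT h.
Proof.
move=> h0 mh hr; apply/integrableP; split => //.
under eq_integral do rewrite gee0_abs//.
by rewrite hr ltry.
Qed.

Section gen.
Context (R : realType) (d dS dW : measure_display)
  (Omega : measurableType d) (S : measurableType dS) (W : measurableType dW)
  (P : probability Omega R) (pi : probability S R)
  (loss : S -> W -> R) (n : nat)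
  (Ss : 'I_n -> {mfun Omega >-> S}) (Wr : {mfun Omega >-> W}).
Hypotheses (n0 : (0 < n)%N) (l0 : forall s w, 0 <= loss s w)
  (ml : measurable_fun [set: S * W] (fun z => loss z.1 z.2)).
Variables (m' : R) (hm : (\int[(pi \x distribution P Wr)%E]_z (loss z.1 z.2)%:E = m'%:E)%E).
Variables (Ff : 'I_n -> R)
  (FE : forall i, (\int[P]_o (loss (Ss i o) (Wr o))%:E = (Ff i)%:E)%E).

Let mlE : measurable_fun [set: S * W] (fun z => (loss z.1 z.2)%:E).
Proof. exact/measurable_EFinP. Qed.
Let lE0 : forall z : S * W, (0 <= (loss z.1 z.2)%:E)%E.
Proof. by move=> z; rewrite lee_fin. Qed.

Let mpop : measurable_fun setT (pop_risk pi loss).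
Proof. exact: (measurable_fun_fubini_tonelli_G (m1:=pi) _ mlE lE0). Qed.
Let pop0 w : (0 <= pop_risk pi loss w)%E.
Proof. by apply: integral_ge0 => s _; rewrite lee_fin. Qed.

Let int_pop : (\int[P]_o pop_risk pi loss (Wr o) = m'%:E)%E.
Proof.
rewrite -hm (fubini_tonelli2 _ mlE lE0).
by rewrite (ge0_integral_distribution Wr mpop pop0).
Qed.

Let mli i : measurable_fun setT (fun o => loss (Ss i o) (Wr o)).
Proof.
exact: (measurableT_comp ml (measurable_funP (pairRV (Ss i) Wr))).
Qed.

Let int_emp : (\int[P]_o emp_risk (fun i => Ss i o) loss (Wr o) =
  (n%:R^-1)%:E * \sum_(i < n) (Ff i)%:E)%E.
Proof.
have h1 : forall o, setT o -> (0 <= \sum_(i < n) (loss (Ss i o) (Wr o))%:E)%E.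
  by move=> o _; apply: sume_ge0 => i _; rewrite lee_fin.
have h2 : measurable_fun setT (fun o => \sum_(i < n) (loss (Ss i o) (Wr o))%:E)%E.
  by apply: emeasurable_sum => i; apply/measurable_EFinP.
have h3 : 0 <= n%:R^-1 :> R by rewrite invr_ge0.
have h4 : forall i, measurable_fun setT (fun o => (loss (Ss i o) (Wr o))%:E).
  by move=> i; apply/measurable_EFinP.
have h5 : forall i o, setT o -> (0 <= (loss (Ss i o) (Wr o))%:E)%E.
  by move=> i o _; rewrite lee_fin.
rewrite /emp_risk ge0_integralZl_EFin//.
congr (_ * _)%E; rewrite ge0_integral_sum//.
by apply: eq_bigr => i _; exact: FE.
Qed.

Lemma gen_decomp : gen_error P pi loss (fun i => Ss i : Omega -> S) Wr =
  ((n%:R^-1) * \sum_(i < n) (m' - Ff i))%:E.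
Proof.
rewrite /gen_error.
have i1 : P.-integrable setT (fun o => pop_risk pi loss (Wr o)).
  apply: (@ge0_intble _ _ _ _ _ m') => //.
  exact: measurableT_comp mpop _.
have i2 : P.-integrable setT (fun o => emp_risk (fun i => Ss i o) loss (Wr o)).
  apply: (@ge0_intble _ _ _ _ _ (n%:R^-1 * \sum_(i < n) Ff i)).
  - move=> o; apply: mule_ge0; first by rewrite lee_fin invr_ge0.
    by apply: sume_ge0 => i _; rewrite lee_fin.
  - apply: measurable_funeM; apply: emeasurable_sum => i.
    by apply/measurable_EFinP.
  - by rewrite int_emp sumEFin -EFinM.
rewrite (integralB measurableT i1 i2) int_pop int_emp sumEFin -EFinM -EFinB.
congr (_%:E); rewrite sumrB sumr_const card_ord mulrBr.
congr (_ - _); rewrite -[m' *+ n]mulr_natr mulrCA mulVf ?mulr1//.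
by rewrite pnatr_eq0 -lt0n.
Qed.

End gen.

Lemma marg (R : realType) (d dS : measure_display)
  (Omega : measurableType d) (S : measurableType dS)
  (P : probability Omega R) (pi : probability S R) (n : nat)
  (Ss : 'I_n -> {mfun Omega >-> S}) :
  iid_law P (fun i => Ss i : Omega -> S) pi ->
  forall i A, measurable A -> distribution P (Ss i) A = pi A.
Proof.
move=> iid i A mA.
have mAj : forall j, measurable (if j == i then A else setT).
  by move=> j; case: (j == i) => //; exact: measurableT.
have := iid (fun j => if j == i then A else setT) mAj.
rewrite (bigD1 i) //= eqxx big1 ?mule1; last first.
  by move=> j /negbTE ->; exact: probability_setT.
move=> <-; rewrite /distribution /pushforward /=; congr (P _).
apply/seteqP; split => x /=.
  by move=> hA j _; case: ifP => [/eqP -> //|].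
by move=> /(_ i I); rewrite eqxx.
Qed.

Theorem theorem1 (R : realType) (d dS dW : measure_display)
  (Omega : measurableType d) (S : measurableType dS) (W : measurableType dW)
  (P : probability Omega R) (pi : probability S R)
  (loss : S -> W -> R) (n : nat)
  (Ss : 'I_n -> {mfun Omega >-> S}) (Wr : {mfun Omega >-> W})
  (bp bm : \bar R) (psip psim : R -> R) :
  (0 < n)%N ->
  (forall s w, 0 <= loss s w) ->
  measurable_fun [set: S * W] (fun z => loss z.1 z.2) ->
  iid_law P (fun i => Ss i : Omega -> S) pi ->
  (* E[loss(Sbar, Wbar)] is finite, so that Lambda is well defined *)
  (pi \x distribution P Wr)%E.-integrable [set: S * W]
     (fun z => (loss z.1 z.2)%:E) ->
  (0 < bp)%E ->
  convex_function (dom0b bp : set (convex_lmodType R^o)) psip ->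
  psip 0 = 0 ->
  (fun h => psip h / h) @ 0^'+ --> 0 ->
  (forall l, dom0b bp l ->
     (cgf (pi \x distribution P Wr)%E (fun z => loss z.1 z.2) l
       <= (psip l)%:E)%E) ->
  (0 < bm)%E ->
  convex_function (dom0b bm : set (convex_lmodType R^o)) psim ->
  psim 0 = 0 ->
  (fun h => psim h / h) @ 0^'+ --> 0 ->
  (forall l, l <= 0 -> (- bm < l%:E)%E ->
     (cgf (pi \x distribution P Wr)%E (fun z => loss z.1 z.2) l
       <= (psim (- l))%:E)%E) ->
  (- ((n%:R^-1)%:E *
        \sum_(i < n) legendre_dual_inv bp psip (mutual_info P (Ss i) Wr))
     <= gen_error P pi loss (fun i => Ss i : Omega -> S) Wr)%E /\
  (gen_error P pi loss (fun i => Ss i : Omega -> S) Wr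
     <= (n%:R^-1)%:E *
        \sum_(i < n) legendre_dual_inv bm psim (mutual_info P (Ss i) Wr))%E.
Proof.
move=> n0 l0 ml iid intQ bp0 _ psip0 _ hp bm0 _ psim0 _ hn.
have [m' hm] : exists m', (\int[(pi \x distribution P Wr)%E]_z (loss z.1 z.2)%:E = m'%:E)%E.
  exists (fine (\int[(pi \x distribution P Wr)%E]_z (loss z.1 z.2)%:E)%E).
  by rewrite fineK//; exact: integrable_fin_num.
have a0 : (0 < (n%:R^-1 : R)) by rewrite invr_gt0 ltr0n.
have Ige i : mutual_info P (Ss i) Wr = +oo%E \/
    exists k, mutual_info P (Ss i) Wr = k%:E.
  rewrite /mutual_info.
  case: (pselect (distribution P (pairRV (Ss i) Wr) `<<
     (distribution P (Ss i) \x distribution P Wr)%E)) => pq; last first.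
    by left; rewrite /KL; case: pselect.
  have := @KL_gtNy _ _ _ _ _ pq.
  case: (KL _ _) => [k _|_|//]; [right; exists k|left] => //.
case: (pselect (exists i, mutual_info P (Ss i) Wr = +oo%E)) => [[i hi]|hfin].
  have sumy (b : \bar R) (psi : R -> R) :
      (\sum_(j < n) legendre_dual_inv b psi (mutual_info P (Ss j) Wr) = +oo)%E.
    rewrite (bigD1 i) //= hi ldi_y.
    have h0 : (0 <= \sum_(j < n | j != i) legendre_dual_inv b psi
                 (mutual_info P (Ss j) Wr))%E.
      by apply: sume_ge0 => j _; exact: ldi_ge0.
    by rewrite addye // -ltNye (lt_le_trans _ h0) // ltNy0.
  rewrite !sumy gt0_muley ?lte_fin //; split; [by rewrite leNye | by rewrite leey].
have kE i : exists k, mutual_info P (Ss i) Wr = k%:E.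
  case: (Ige i) => // hi; exfalso; apply: hfin; by exists i.
have mlE : measurable_fun [set: S * W] (fun z => (loss z.1 z.2)%:E).
  exact/measurable_EFinP.
have lE0 : forall z : S * W, (0 <= (loss z.1 z.2)%:E)%E.
  by move=> z; rewrite lee_fin.
have Hi i : exists F, (\int[P]_o (loss (Ss i o) (Wr o))%:E = F%:E)%E /\
    ((m' - F)%:E <= legendre_dual_inv bm psim (mutual_info P (Ss i) Wr))%E /\
    (- legendre_dual_inv bp psip (mutual_info P (Ss i) Wr) <= (m' - F)%:E)%E.
  have [k hk] := kE i.
  have hQ : forall A, measurable A ->
      (distribution P (Ss i) \x distribution P Wr)%E A =
      (pi \x distribution P Wr)%E A.
    move=> A mA; rewrite /product_measure1 /=.
    by apply: eq_measure_integral => B mB _; exact: marg.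
  have := @core R _ (S * W)%type (distribution P (pairRV (Ss i) Wr))
    (distribution P (Ss i) \x distribution P Wr)%E (pi \x distribution P Wr)%E
    (fun z => loss z.1 z.2) (fun z => l0 _ _) ml hQ m' hm bp bm psip psim
    psip0 psim0 bp0 hp hn k hk.
  case=> F [FE [h1 h2]]; exists F; rewrite hk; split => //.
  by rewrite -FE (ge0_integral_distribution (pairRV (Ss i) Wr) mlE lE0).
pose Ff i := fine (\int[P]_o (loss (Ss i o) (Wr o))%:E)%E.
have FE i : (\int[P]_o (loss (Ss i o) (Wr o))%:E = (Ff i)%:E)%E.
  by have [F [FE _]] := Hi i; rewrite /Ff FE.
rewrite (@gen_decomp _ _ _ _ _ _ _ P pi loss n Ss Wr n0 l0 ml m' hm Ff FE).
rewrite EFinM -sumEFin; split.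
- rewrite leeNl -muleN -sumeN; last by [].
  apply: lee_wpmul2l; first by rewrite lee_fin ltW.
  apply: lee_sum => i _; have [F [FE' [_ h2]]] := Hi i.
  by move: h2; rewrite leeNl /Ff FE'.
- apply: lee_wpmul2l; first by rewrite lee_fin ltW.
  apply: lee_sum => i _; have [F [FE' [h1 _]]] := Hi i.
  by move: h1; rewrite /Ff FE'.
Qed.
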